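(* ODH satisfies the lower quota. Let $\sigma=\langle\mathcal V,\mathcal C,S,B\rangle$ be an approval-based multi-winner election, let $\mathcal A\subseteq\mathcal C$, and let $\{y_1,\dots,y_n\}\subseteq2^{\mathcal C}$ be such that: - $\mathcal A\subseteq y_j$ for all $j=1,\dots,n$; - with $q=\frac{\sum_{j=1}^nB(y_j)}{|\mathcal V|}S$, one has $|\mathcal A|\ge\lfloor q\rfloor$. Then every output $W$ of ODH on $\sigma$ (under any tie-breaking) satisfies $\big|W\cap\bigcup_{j=1}^ny_j\big|\ge\lfloor q\rfloor$.
   Context: An approval-based multi-winner election is a tuple $\sigma=\langle \mathcal V,\mathcal C,S,B\rangle$, where $\mathcal V$ is a finite set of agents, $\mathcal C$ is a finite set of candidates, $1\le S\le|\mathcal C|$ is an integer, and $B:2^{\mathcal C}\to\mathbb N$ gives, for each $\mathcal A\subseteq\mathcal C$, the number $B(\mathcal A)$ of agents whose ballot is exactly $\mathcal A$ (with $\sum_{\mathcal A}B(\mathcal A)\le|\mathcal V|$). For a non-empty $\mathcal A\subseteq\mathcal C$, the family $\mathfrak F_{\sigma,\mathcal A}$ is the set of all $F:2^{\mathcal C}\times\mathcal A\to\mathbb R$ such that: - $F(y,c)\ge0$ for all $y$ and $c$; - $F(y,c)=0$ if $c\notin y$; - $\sum_{c\in\mathcal A\cap y}F(y,c)=B(y)$ whenever $y\cap\mathcal A\neq\emptyset$. We write $\mathrm{Supp}_F(c)=\sum_yF(y,c)$ and $\mathrm{maxMin}(\sigma,\mathcal A)=\sup_{F\in\mathfrak F_{\sigma,\mathcal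 A}}\min_{c\in\mathcal A}\mathrm{Supp}_F(c)$. We also write $\mathfrak F^{\mathrm{opt}}_{\sigma,\mathcal A}=\{F\in\mathfrak F_{\sigma,\mathcal A}:\mathrm{Supp}_F(c)\ge\mathrm{maxMin}(\sigma,\mathcal A)\ \forall c\in\mathcal A\}$. The Open D'Hondt (ODH) rule proceeds as follows. Start with $\mathcal C_e=\emptyset$ and repeat $S$ times: - for each $c\in\mathcal C\setminus\mathcal C_e$, choose any $F\in\mathfrak F^{\mathrm{opt}}_{\sigma,\mathcal C_e\cup\{c\}}$ and set $s_c=\mathrm{Supp}_F(c)$; - then add to $\mathcal C_e$ some $w$ maximizing $s_w$ (ties broken arbitrarily). Finally, output $\mathcal C_e$. *)

(* Defs.v *)
From HB Require Import structures.
From mathcomp Require Import all_boot all_order all_algebra.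
Set Implicit Arguments. Unset Strict Implicit. Unset Printing Implicit Defensive.
Import Order.TTheory GRing.Theory Num.Theory.
Local Open Scope ring_scope.

Section ODH.
Variables (R : realFieldType) (C : finType) (B : {set C} -> nat).

(* F : 2^C x A -> R, represented as a function on {set C} -> C -> R
   which vanishes outside A. *)
Definition in_family (A : {set C}) (F : {set C} -> C -> R) : Prop :=
  forall (y : {set C}) (c : C),
    [/\ 0 <= F y c,
        (c \notin y -> F y c = 0),
        (c \notin A -> F y c = 0)
      & (y :&: A != set0 -> \sum_(d in A :&: y) F y d = (B y)%:R)].

Definition Supp (F : {set C} -> C -> R) (c : C) : R := \sum_(y : {set C}) F y c.

(* F is in F^opt_{sigma,A}: F is in the family and for every c in A,
   Supp_F(c) >= maxMin(sigma,A), i.e. Supp_F(c) >= min_{c' in A} Supp_G(c')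
   for every G in the family (sup unfolded as least upper bound). *)
Definition is_opt (A : {set C}) (F : {set C} -> C -> R) : Prop :=
  in_family A F /\
  forall G, in_family A G -> forall c, c \in A ->
    exists2 c', c' \in A & Supp G c' <= Supp F c.

Definition odh_step (Ce : {set C}) (w : C) : Prop :=
  w \notin Ce /\
  exists s : C -> R,
    (forall c, c \notin Ce -> exists F, is_opt (c |: Ce) F /\ s c = Supp F c) /\
    (forall c, c \notin Ce -> s c <= s w).

(* W is a possible output of ODH with committee size S
   (for some choice of the F's and some tie-breaking). *)
Definition odh_output (S : nat) (W : {set C}) : Prop :=
  exists ws : seq C,
    [/\ size ws = S,
        (forall (k : nat) (w0 : C), (k < S)%N ->
           odh_step [set x in take k ws] (nth w0 ws k))
      & W = [set x in ws]].

End ODH.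

(* Main.v *)
Require Import Defs.
From HB Require Import structures.
From mathcomp Require Import all_boot all_order all_algebra.
From mathcomp Require Import lra ring.
Import Order.TTheory GRing.Theory Num.Theory.

Module Helpers.
Set Implicit Arguments. Unset Strict Implicit. Unset Printing Implicit Defensive.
Local Open Scope ring_scope.

Section Aux.
Variables (R : realFieldType) (C : finType) (B : {set C} -> nat).

Definition good (X : {set C}) (l : R) :=
  exists G, in_family B X G /\ forall c, c \in X -> l <= Supp G c.

Lemma sumI (A y : {set C}) (f : C -> R) :
  (forall d, d \notin y -> f d = 0) -> \sum_(d in A :&: y) f d = \sum_(d in A) f d.
Proof.
move=> H; rewrite [RHS](big_setID y) /= [X in _ + X]big1 ?addr0 //.
by move=> i; rewrite in_setD => /andP [/H].
Qed.

Lemma fam_ge0 X (G : {set C} -> C -> R) y c : in_family B X G -> 0 <= G y c.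
Proof. by move=> H; case: (H y c). Qed.

Lemma fam_out X (G : {set C} -> C -> R) (y : {set C}) c : in_family B X G -> c \notin y -> G y c = 0.
Proof. by move=> H; case: (H y c). Qed.

Lemma fam_outA X (G : {set C} -> C -> R) y c : in_family B X G -> c \notin X -> G y c = 0.
Proof. by move=> H; case: (H y c). Qed.

Lemma fam_sum X (G : {set C} -> C -> R) y : in_family B X G -> y :&: X != set0 ->
  \sum_(d in X) G y d = (B y)%:R.
Proof.
move=> H ne; have /set0Pn [c _] := ne; case: (H y c) => _ _ _ /(_ ne) <-.
by rewrite sumI // => d; apply: fam_out H.
Qed.

Lemma fam_sum_le X (G : {set C} -> C -> R) y : in_family B X G -> \sum_(d in X) G y d <= (B y)%:R.
Proof.
move=> H; case: (boolP (y :&: X == set0)) => [/eqP e|ne]; last by rewrite fam_sum.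
rewrite big1 ?ler0n // => d dX; apply: (fam_out H).
apply/negP => dy; have : d \in y :&: X by rewrite inE dy.
by rewrite e inE.
Qed.

Lemma fam_total X (G : {set C} -> C -> R) : in_family B X G ->
  \sum_(c in X) Supp G c <= (\sum_y B y)%:R.
Proof.
move=> H; rewrite /Supp exchange_big /= natr_sum; apply: ler_sum => y _.
exact: fam_sum_le.
Qed.

Lemma fam_comb X (F G : {set C} -> C -> R) (a : R) : in_family B X F -> in_family B X G ->
  0 <= a -> a <= 1 ->
  in_family B X (fun y c => a * F y c + (1 - a) * G y c).
Proof.
move=> HF HG a0 a1 y c; split.
- by rewrite addr_ge0 // mulr_ge0 ?subr_ge0 // (fam_ge0 _ _ HF, fam_ge0 _ _ HG).
- by move=> cy; rewrite (fam_out HF cy) (fam_out HG cy) !mulr0 addr0.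
- by move=> cy; rewrite (fam_outA _ HF cy) (fam_outA _ HG cy) !mulr0 addr0.
- move=> ne; rewrite sumI; last first.
    by move=> d dy; rewrite (fam_out HF dy) (fam_out HG dy) !mulr0 addr0.
  by rewrite big_split /= -!mulr_sumr !fam_sum // mulrBl mul1r addrCA subrr addr0.
Qed.

Lemma Supp_comb (F G : {set C} -> C -> R) (a : R) c :
  Supp (fun y c => a * F y c + (1 - a) * G y c) c = a * Supp F c + (1 - a) * Supp G c.
Proof. by rewrite /Supp big_split /= -!mulr_sumr. Qed.

Definition ext (G : {set C} -> C -> R) (X : {set C}) (w : C) :=
  fun y c => if c == w then (if (y :&: X == set0) && (w \in y) then (B y)%:R else 0)
             else G y c.

Lemma ext_family (X : {set C}) (G : {set C} -> C -> R) w : w \notin X -> in_family B X G -> in_family B (w |: X) (ext G X w).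
Proof.
move=> wX H y c; rewrite /ext; split.
- case: eqP => _; last exact: (fam_ge0 _ _ H).
  by case: ifP => // _; rewrite ler0n.
- case: eqP => [->|_]; last exact: (fam_out H).
  by move=> /negbTE ->; rewrite andbF.
- rewrite in_setU1 negb_or => /andP [/negbTE -> cX]; exact: (fam_outA _ H).
- move=> ne; rewrite sumI; last first.
    move=> d dy; case: eqP => [<-|_]; last exact: (fam_out H).
    by rewrite (negbTE dy) andbF.
  rewrite big_setU1 //= eqxx.
  rewrite (eq_bigr (fun d => G y d)); last first.
    by move=> d dX; case: eqP => // e; rewrite -e dX in wX.
  case: (boolP (y :&: X == set0)) => [/eqP e|ne2] /=; last by rewrite fam_sum // add0r.
  have wy : w \in y.
    case/set0Pn: ne => d; rewrite !inE => /andP [dy /orP [/eqP <- //|dX]].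
    have : d \in y :&: X by rewrite inE dy.
    by rewrite e inE.
  rewrite wy big1 ?addr0 // => d dX; apply: (fam_out H); apply/negP => dy.
  have : d \in y :&: X by rewrite inE dy.
  by rewrite e inE.
Qed.

Lemma Supp_ext (G : {set C} -> C -> R) X w c : c != w -> Supp (ext G X w) c = Supp G c.
Proof. by move=> cw; apply: eq_bigr => y _; rewrite /ext (negbTE cw). Qed.

Lemma Supp_ge0 X (G : {set C} -> C -> R) c : in_family B X G -> 0 <= Supp G c.
Proof. move=> H; apply: sumr_ge0 => y _; exact: (fam_ge0 _ _ H). Qed.

End Aux.

Section Aux2.
Variables (R : realFieldType) (C : finType) (B : {set C} -> nat).

Lemma argmin_ex (A : {set C}) (f : C -> R) : A != set0 ->
  exists2 c0, c0 \in A & forall c, c \in A -> f c0 <= f c.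
Proof.
case/set0Pn => a aA; case: (arg_minP f aA) => c0 c0A H.
by exists c0.
Qed.

Lemma good_step (X : {set C}) w (l : R) (F : {set C} -> C -> R) :
  w \notin X -> good B X l -> is_opt B (w |: X) F -> l <= Supp F w ->
  good B (w |: X) l.
Proof.
move=> wX [G [HG Gl]] [HF Fopt] Fw.
exists F; split=> //.
have ne : w |: X != set0 by apply/set0Pn; exists w; rewrite setU11.
have [c0 c0in c0min] := argmin_ex (Supp F) ne.
case: (lerP l (Supp F c0)) => [h|h].
  by move=> c cin; apply: le_trans h (c0min c cin).
exfalso.
set mu := Supp F c0 in h c0min.
have mu0 : 0 <= mu by exact: Supp_ge0 HF.
have l0 : 0 < l by apply: le_lt_trans h.
pose al := (l - mu) / (l + l).
have alE : al * (l + l) = l - mu by rewrite /al divfK // gt_eqF // addr_gt0.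
have al0 : 0 < al by rewrite /al divr_gt0 ?subr_gt0 ?addr_gt0.
have al1 : al <= 1 by nra.
pose G' := ext B G X w.
have HG' : in_family B (w |: X) G' := ext_family wX HG.
pose H := fun y c => al * G' y c + (1 - al) * F y c.
have HH : in_family B (w |: X) H by rewrite /H; apply: fam_comb => //; lra.
have [c' c'in] := Fopt H HH c0 c0in.
rewrite /H Supp_comb -/mu.
have SG0 : 0 <= Supp G' c' by exact: Supp_ge0 HG'.
have SFc' := c0min c' c'in.
case/setU1P: c'in => [ec|c'X].
  rewrite ec in SFc' SG0 *.
  have : (1 - al) * l <= (1 - al) * Supp F w by apply: ler_wpM2l; lra.
  have : 0 <= al * Supp G' w by apply: mulr_ge0; lra.
  nra.
have cw : c' != w by apply/eqP => e; move: wX; rewrite -e c'X.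
have SG : l <= Supp G' c' by rewrite /G' Supp_ext //; apply: Gl.
have : al * l <= al * Supp G' c' by apply: ler_wpM2l; lra.
have : (1 - al) * mu <= (1 - al) * Supp F c' by apply: ler_wpM2l; lra.
nra.
Qed.
End Aux2.

Section Aux3.
Variables (R : realFieldType) (C : finType) (B : {set C} -> nat).

Lemma good_add (Y : {set {set C}}) (X : {set C}) a (l : R) :
  a \notin X -> (forall y, y \in Y -> a \in y) -> 0 <= l -> good B X l ->
  (#|X :&: \bigcup_(y in Y) y|.+1)%:R * l <= (\sum_(y in Y) B y)%:R ->
  good B (a |: X) l.
Proof.
set T := \bigcup_(y in Y) y.
move=> aX aY l0 [G [HG Gl]] hN.
pose p k := \sum_(y in Y) G y k.
pose r k := \sum_(y | y \notin Y) G y k.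
pose f k := if l <= r k then 0 else (l - r k) / p k.
have Spr k : Supp G k = p k + r k by rewrite /Supp (bigID (fun y => y \in Y)).
have p0 k : 0 <= p k by apply: sumr_ge0 => y _; exact: fam_ge0 HG.
have r0 k : 0 <= r k by apply: sumr_ge0 => y _; exact: fam_ge0 HG.
have fP k : k \in X -> [/\ 0 <= f k, f k <= 1, f k * p k <= l & l <= r k + f k * p k].
  move=> kX; have := Gl k kX; rewrite Spr /f => Sk.
  case: ifP => h; first by rewrite mul0r addr0; split => //; lra.
  move/negbT: h; rewrite -ltNge => h.
  have rk := r0 k; have pk : 0 < p k by lra.
  have e : (l - r k) / p k * p k = l - r k by rewrite divfK // gt_eqF.
  rewrite e; split; [| | lra | lra].
    by rewrite divr_ge0 // ?subr_ge0 ?ltW.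
  by rewrite ler_pdivrMr // mul1r; lra.
pose S y := \sum_(k in X) G y k * f k.
have S0 y : y \in Y -> 0 <= S y <= (B y)%:R.
  move=> yY; apply/andP; split.
    by apply: sumr_ge0 => k kX; have [? _ _ _] := fP k kX; rewrite mulr_ge0 // (fam_ge0 _ _ HG).
  apply: le_trans (fam_sum_le y HG); apply: ler_sum => k kX.
  by have [_ ? _ _] := fP k kX; rewrite ler_piMr // (fam_ge0 _ _ HG).
pose G2 y c := if y \in Y then (if c \in X then G y c * f c
     else if c == a then (B y)%:R - S y else 0) else ext B G X a y c.
have G2out (y : {set C}) (c : C) : c \notin y -> G2 y c = 0.
  move=> cy; rewrite /G2; case: ifP => yY; last first.
    by case: (ext_family aX HG y c) => _ ->.
  case: ifP => cX; first by rewrite (fam_out HG cy) mul0r.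
  case: eqP => // e; move: cy; rewrite e aY //.
have HG2 : in_family B (a |: X) G2.
  move=> y c; case: (boolP (y \in Y)) => yY; last first.
    by move: (ext_family aX HG y c); rewrite /G2 (negbTE yY).
  split.
  - rewrite /G2 yY; case: ifP => cX.
      by have [? _ _ _] := fP c cX; rewrite mulr_ge0 // (fam_ge0 _ _ HG).
    by case: ifP => // _; have := S0 y yY; lra.
  - exact: G2out.
  - rewrite in_setU1 negb_or => /andP [ca cX].
    by rewrite /G2 yY (negbTE cX) (negbTE ca).
  - move=> _; rewrite sumI; last exact: G2out.
    rewrite big_setU1 //= {1}/G2 yY (negbTE aX) eqxx.
    rewrite (eq_bigr (fun k => G y k * f k)); last by move=> k kX; rewrite /G2 yY kX.
    by rewrite subrK.
exists G2; split=> // c; case/setU1P => [->|cX]; last first.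
  have ca : c != a by apply/eqP => e; move: aX; rewrite -e cX.
  rewrite /Supp (bigID (fun y => y \in Y)) /=.
  rewrite (eq_bigr (fun y => G y c * f c)); last by move=> y yY; rewrite /G2 yY cX.
  rewrite [X in _ + X](eq_bigr (fun y => G y c)); last first.
    by move=> y yY; rewrite /G2 (negbTE yY) /ext (negbTE ca).
  rewrite -mulr_suml -/(p c) -/(r c) mulrC addrC.
  by have [_ _ _ ?] := fP c cX.
rewrite /Supp (bigID (fun y => y \in Y)) /=.
have R0 : 0 <= \sum_(y | y \notin Y) G2 y a.
  by apply: sumr_ge0 => y _; exact: fam_ge0 HG2.
rewrite (eq_bigr (fun y => (B y)%:R - S y)); last first.
  by move=> y yY; rewrite /G2 yY (negbTE aX) eqxx.
rewrite sumrB -natr_sum.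
have -> : \sum_(y in Y) S y = \sum_(k in X) p k * f k.
  rewrite /S exchange_big /=; apply: eq_bigr => k _; by rewrite mulr_suml.
rewrite (big_setID T) /=.
rewrite [\sum_(k in X :\: T) _]big1 ?addr0; last first.
  move=> k; rewrite !inE => /andP [kT _].
  rewrite /p big1 ?mul0r // => y yY; apply: (fam_out HG).
  apply: contra kT => ky; exact: (subsetP (bigcup_sup _ yY)).
have : \sum_(k in X :&: T) p k * f k <= \sum_(k in X :&: T) l.
  apply: ler_sum => k; rewrite inE => /andP [kX _].
  by have [_ _ ? _] := fP k kX; rewrite mulrC.
rewrite sumr_const -mulr_natr.
move: hN; rewrite -addn1 natrD mulrDl mul1r.
lra.
Qed.
End Aux3.

End Helpers.
Import Helpers.

Theorem theorem5 (R : realFieldType) (V C : finType) (S : nat)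
    (B : {set C} -> nat)
    (hS1 : (1 <= S)%N) (hS2 : (S <= #|C|)%N)
    (hB : (\sum_(y : {set C}) B y <= #|V|)%N)
    (A : {set C}) (Y : {set {set C}})
    (hAY : forall y, y \in Y -> A \subset y)
    (hq : ((S * \sum_(y in Y) B y) %/ #|V| <= #|A|)%N)
    (W : {set C}) (hW : odh_output R B S W) :
  ((S * \sum_(y in Y) B y) %/ #|V| <= #|W :&: \bigcup_(y in Y) y|)%N.
Proof.
Local Open Scope ring_scope.
set N := (\sum_(y in Y) B y)%N in hq *.
set T := \bigcup_(y in Y) y.
set q := ((S * N) %/ #|V|)%N in hq *.
rewrite leqNgt; apply/negP => hlt.
set m := #|W :&: T| in hlt.
have q0 : (0 < q)%N by apply: leq_ltn_trans hlt.
have V0 : (0 < #|V|)%N.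
  by rewrite lt0n; apply/eqP => e; move: q0; rewrite /q e divn0.
have [e|[y0 y0Y]] := set_0Vmem Y.
  by move: q0; rewrite /q /N e big_set0 muln0 div0n.
have AT : A \subset T.
  exact: subset_trans (hAY _ y0Y) (bigcup_sup _ y0Y).
have [a aA aW] : exists2 a, a \in A & a \notin W.
  have : (#|A :&: W| < #|A|)%N.
    apply: leq_ltn_trans _ (leq_trans hlt hq).
    apply: subset_leq_card; apply/subsetP => x; rewrite !inE => /andP [xA xW].
    by rewrite xW (subsetP AT).
  rewrite -(cardsID W A) -{1}[#|A :&: W|]addn0 ltn_add2l card_gt0 => /set0Pn [a].
  by rewrite inE => /andP [aW aA]; exists a.
have hmV : (m.+1 * #|V| <= S * N)%N.
  apply: (leq_trans _ (leq_divM (S * N) #|V|)); by rewrite leq_mul2r hlt orbT.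
have AY y : y \in Y -> a \in y by move=> yY; exact: (subsetP (hAY y yY)).
case: hW => ws [sz hstep eW].
pose M : R := (m.+1)%:R.
have M0 : (0 < M)%R by rewrite ltr0n.
pose l : R := (N%:R / M)%R.
have lM : (l * M = N%:R)%R by rewrite /l divfK // gt_eqF.
have l0 : (0 <= l)%R by rewrite /l divr_ge0 // ler0n.
have CeW k : [set x in take k ws] \subset W.
  by apply/subsetP => x; rewrite eW !inE => /mem_take.
have hN k : ((#|[set x in take k ws] :&: T|.+1)%:R * l <= N%:R)%R.
  rewrite -lM mulrC; apply: ler_wpM2l => //; rewrite ler_nat ltnS.
  by apply: subset_leq_card; apply: setSI.
have key k : (k <= S)%N -> good B [set x in take k ws] l /\ #|[set x in take k ws]| = k.
  elim: k => [_|k IH kS].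
    rewrite take0; have -> : [set x in [::]] = set0 :> {set C} by apply/setP => x; rewrite !inE.
    split; last by rewrite cards0.
    exists (fun _ _ => 0%R); split; last by move=> c; rewrite inE.
    by move=> y c; split => //; rewrite setI0 eqxx.
  have [IHg IHc] := IH (ltnW kS).
  set Ce := [set x in take k ws] in IHg IHc *.
  have [wCe [s [hs hmax]]] := hstep k a kS.
  set w := nth a ws k in wCe hmax *.
  have aCe : a \notin Ce by apply: contra aW; exact: (subsetP (CeW k)).
  have [Fa [[HFa Faopt] sa]] := hs a aCe.
  have [G' [HG' G'l]] := good_add aCe AY l0 IHg (hN k).
  have [c' c'in le] := Faopt G' HG' a (setU11 _ _).
  have [Fw [Fwopt sw]] := hs w wCe.
  have lw : (l <= Supp Fw w)%R.
    rewrite -sw; apply: le_trans (hmax a aCe); rewrite sa.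
    exact: le_trans (G'l c' c'in) le.
  have eq : [set x in take k.+1 ws] = w |: Ce.
    rewrite (take_nth a); last by rewrite sz.
    by apply/setP => x; rewrite !inE mem_rcons in_cons.
  rewrite eq; split; first exact: good_step wCe IHg Fwopt lw.
  by rewrite cardsU1 wCe IHc.
have [gd cW] := key S (leqnn S).
have hNS := hN S.
have eWs : [set x in take S ws] = W by rewrite -sz take_size eW.
rewrite eWs in gd cW hNS.
have [G [HG Gl]] := good_add aW AY l0 gd hNS.
have up := fam_total HG.
have lo : \sum_(c in a |: W) l <= \sum_(c in a |: W) Supp G c by apply: ler_sum.
rewrite sumr_const cardsU1 aW cW -mulr_natr in lo.
have hBR : (\sum_y B y)%:R <= #|V|%:R :> R by rewrite ler_nat.
have hmVR : M * #|V|%:R <= S%:R * N%:R :> R by rewrite -!natrM ler_nat.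
have V1 : 1 <= #|V|%:R :> R by rewrite ler1n.
have e1 : l * (1 + S)%:R = l + l * S%:R by rewrite natrD mulrDr mulr1.
rewrite e1 in lo.
have : M * (l + l * S%:R) <= M * #|V|%:R by apply: ler_wpM2l; [lra|lra].
have e2 : M * (l + l * S%:R) = N%:R + S%:R * N%:R by rewrite mulrDr -lM; ring.
rewrite e2 => h2.
have MV : M <= M * #|V|%:R by rewrite -{1}[M]mulr1; apply: ler_wpM2l; lra.
have SN : 0 < S%:R * N%:R :> R by lra.
have N0 : 0 < N%:R :> R.
  rewrite ltr0n lt0n; apply/eqP => e; move: SN; rewrite e mulr0; lra.
suff : (0:R) < 0 by rewrite ltxx.
lra.
Qed.
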